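(* Let $B\subseteq\mathbb{N}$ have positive upper density. Then there exist a unary function $f\in\mathscr{C}_{I_{\bar d=0}}$ and a strictly increasing sequence $(n_i)_{i\ge1}$ of natural numbers such that $f[B]\supseteq\bigcup_{i\ge1}[n_i,2n_i)$.
   Context: $\mathbb{N}=\{0,1,2,\dots\}$. For $A\subseteq\mathbb{N}$, $\bar d(A)=\limsup_{n\to\infty}\frac{|A\cap[0,n)|}{n}$. $\mathscr{C}_{I_{\bar d=0}}$ is the set of all finitary functions $f:\mathbb{N}^k\to\mathbb{N}$ ($k\ge1$) such that $\bar d(f[A^k])=0$ whenever $\bar d(A)=0$. Intervals are intervals of natural numbers. *)

(* Defs.v *)
From Stdlib Require Import Reals ClassicalEpsilon Fin.
From Coquelicot Require Import Coquelicot.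
Open Scope R_scope.

Fixpoint count_below (A : nat -> Prop) (n : nat) : nat :=
  match n with
  | O => O
  | S m => (count_below A m +
            (if excluded_middle_informative (A m) then 1 else 0))%nat
  end.

Definition upper_density (A : nat -> Prop) : Rbar :=
  LimSup_seq (fun n => INR (count_below A n) / INR n).

Definition image1 (f : nat -> nat) (A : nat -> Prop) : nat -> Prop :=
  fun y => exists x, A x /\ f x = y.

Definition imagek (k : nat) (f : (Fin.t k -> nat) -> nat) (A : nat -> Prop)
  : nat -> Prop :=
  fun y => exists x : Fin.t k -> nat, (forall i, A (x i)) /\ f x = y.

Definition in_C_dbar0 (k : nat) (f : (Fin.t k -> nat) -> nat) : Prop :=
  (1 <= k)%nat /\
  forall A : nat -> Prop, upper_density A = Finite 0 ->
    upper_density (imagek k f A) = Finite 0.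

Definition as_unary (f : nat -> nat) : (Fin.t 1 -> nat) -> nat :=
  fun x => f (x Fin.F1).

(* Main.v *)
Require Import Defs.
From Stdlib Require Import Reals.
From Coquelicot Require Import Coquelicot.
From Stdlib Require Import Lia Lra ClassicalEpsilon.
Open Scope R_scope.
Lemma cnt_S P n : count_below P (S n) =
  (count_below P n + (if excluded_middle_informative (P n) then 1 else 0))%nat.
Proof. reflexivity. Qed.

Lemma cnt_le_n P n : (count_below P n <= n)%nat.
Proof. induction n; rewrite ?cnt_S; [simpl; lia|].
destruct (excluded_middle_informative (P n)); lia. Qed.

Lemma cnt_mono P a b : (a <= b)%nat -> (count_below P a <= count_below P b)%nat.
Proof. induction 1; [lia|]. rewrite cnt_S. lia. Qed.

Lemma cnt_impl (P Q : nat -> Prop) y : (forall v, (v < y)%nat -> P v -> Q v) ->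
  (count_below P y <= count_below Q y)%nat.
Proof. induction y; intros H; [simpl; lia|].
rewrite !cnt_S. specialize (IHy (fun v Hv => H v ltac:(lia))).
destruct (excluded_middle_informative (P y)) as [p|p];
destruct (excluded_middle_informative (Q y)) as [q|q]; try lia.
exfalso; apply q, H; auto. Qed.

Lemma cnt_union (P Q R : nat -> Prop) y : (forall v, P v -> Q v \/ R v) ->
  (count_below P y <= count_below Q y + count_below R y)%nat.
Proof. intros H; induction y; [simpl; lia|].
rewrite !cnt_S.
destruct (excluded_middle_informative (P y)) as [p|p];
destruct (excluded_middle_informative (Q y)) as [q|q];
destruct (excluded_middle_informative (R y)) as [r|r]; try lia.
destruct (H y p); tauto. Qed.

Lemma cnt_false y : count_below (fun _ => False) y = 0%nat.
Proof. induction y; [simpl; lia|]. rewrite cnt_S.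
destruct (excluded_middle_informative False); [tauto|lia]. Qed.

Lemma cnt_single c y : (count_below (fun v => v = c) y <= 1)%nat.
Proof. induction y; [simpl; lia|]. rewrite cnt_S.
destruct (excluded_middle_informative (y = c)) as [e|e]; [|lia].
subst. assert (count_below (fun v => v = c) c = 0)%nat; [|lia].
rewrite <- (Nat.le_0_r). etransitivity.
apply (cnt_impl _ (fun _ => False)). intros; lia.
rewrite cnt_false; lia. Qed.

Lemma cnt_image (Q : nat -> Prop) (h : nat -> nat) M y :
  (count_below (fun v => exists a, (a < M)%nat /\ Q a /\ h a = v) y <= count_below Q M)%nat.
Proof. induction M.
- etransitivity. apply (cnt_impl _ (fun _ => False)).
  intros v _ [a [Ha _]]; lia. rewrite cnt_false; simpl; lia.
- rewrite cnt_S. etransitivity.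
  apply (cnt_union _ (fun v => exists a, (a < M)%nat /\ Q a /\ h a = v)
     (fun v => Q M /\ v = h M)).
  { intros v [a [Ha [Hq Hh]]]. destruct (Nat.eq_dec a M).
    subst; right; auto. left; exists a; split; [lia|auto]. }
  destruct (excluded_middle_informative (Q M)) as [q|q].
  + pose proof (cnt_single (h M) y).
    pose proof (cnt_impl (fun v => Q M /\ v = h M) (fun v => v = h M) y
      (fun v _ H => proj2 H)). lia.
  + pose proof (cnt_impl (fun v => Q M /\ v = h M) (fun v => False) y
      (fun v _ H => q (proj1 H))). rewrite cnt_false in H. lia.
Qed.

Lemma exist_rank B N y : (y < count_below B N)%nat ->
  exists x, (x < N)%nat /\ B x /\ count_below B x = y.
Proof. induction N; [simpl; lia|]. rewrite cnt_S. intros H.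
destruct (Nat.lt_ge_cases y (count_below B N)) as [h|h].
- destruct (IHN h) as [x [? ?]]. exists x; split; [lia|auto].
- destruct (excluded_middle_informative (B N)) as [b|b]; [|lia].
  exists N; repeat split; auto; lia. Qed.
Lemma arch_nat r : exists n : nat, r < INR n.
Proof. destruct (Rle_lt_dec r 0).
- exists 1%nat; simpl; lra.
- destruct (nfloor_ex r) as [n Hn]; [lra|]. exists (S n); rewrite S_INR; lra. Qed.

Lemma pos_good (B : nat -> Prop) : Rbar_lt (Finite 0) (upper_density B) ->
  exists K : nat, (1 <= K)%nat /\ forall M, exists n, (M <= n)%nat /\ (0 < n)%nat /\
     (n < K * count_below B n)%nat.
Proof.
  intros Hpos.
  set (u := fun n => INR (count_below B n) / INR n).
  pose proof (proj2_sig (ex_LimSup_seq u)) as H.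
  unfold upper_density in Hpos. fold u in Hpos. unfold LimSup_seq in Hpos.
  assert (He : exists e, 0 < e /\ forall N, exists n, (N <= n)%nat /\ e < u n).
  { destruct (proj1_sig (ex_LimSup_seq u)) as [l| |] eqn:E; simpl in Hpos, H.
    - assert (Hl : 0 < l / 2) by lra.
      exists (l/2); split; [lra|]. intros N.
      destruct (proj1 (H (mkposreal _ Hl)) N) as [n [Hn1 Hn2]]. simpl in Hn2.
      exists n; split; [auto|lra].
    - exists 1; split; [lra|]. intros N; apply H.
    - contradiction. }
  destruct He as [e [He Hinf]].
  destruct (arch_nat (/e)) as [K HK].
  assert (HK1 : (1 <= K)%nat).
  { destruct K; [simpl in HK; pose proof (Rinv_0_lt_compat e He); lra | lia]. }
  exists K; split; [auto|]. intros M.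
  destruct (Hinf (S M)) as [n [Hn1 Hn2]]. exists n; split; [lia|split; [lia|]].
  unfold u in Hn2.
  assert (Hn0 : 0 < INR n) by (apply lt_0_INR; lia).
  assert (Hc : e * INR n < INR (count_below B n)).
  { apply (Rmult_lt_compat_r (INR n)) in Hn2; [|lra].
    unfold Rdiv in Hn2. rewrite Rmult_assoc, Rinv_l in Hn2; lra. }
  apply INR_lt. rewrite mult_INR.
  assert (INR K * e > 1).
  { apply (Rmult_lt_compat_r e) in HK; [|lra]. rewrite Rinv_l in HK; lra. }
  assert (0 < INR K) by (apply lt_0_INR; lia).
  nra.
Qed.

Theorem mainTheorem10 (B : nat -> Prop) :
  Rbar_lt (Finite 0) (upper_density B) ->
  exists (f : nat -> nat) (n : nat -> nat),
    in_C_dbar0 1 (as_unary f) /\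
    (forall i j, (i < j)%nat -> (n i < n j)%nat) /\
    (forall i m, (n i <= m < 2 * n i)%nat -> image1 f B m).
Proof.
  intros Hpos.
  destruct (pos_good B Hpos) as [K [HK1 Hgood]].
  destruct (constructive_indefinite_description _
    (choice (fun M n => (M <= n)%nat /\ (0 < n)%nat /\ (n < K * count_below B n)%nat) Hgood))
    as [g Hg].
  set (Ns := nat_rect (fun _ => nat) (g 0%nat) (fun _ p => g (K * (count_below B p + 3))%nat)).
  set (c := fun i => count_below B (Ns i)).
  set (m := fun i => (c i / 2)%nat).
  assert (HNs : forall i, (Ns i < K * c i)%nat) by (intros i; destruct i; apply Hg).
  assert (Hm : forall i, (2 * m i <= c i <= 2 * m i + 1)%nat).
  { intros i; unfold m. pose proof (Nat.div_mod (c i) 2). pose proof (Nat.mod_upper_bound (c i) 2). lia. }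
  assert (Hc : forall i, (c i + 3 <= c (S i))%nat).
  { intros i. pose proof (HNs (S i)).
    assert (Ns (S i) = g (K * (c i + 3))%nat) by reflexivity.
    pose proof (proj1 (Hg (K * (c i + 3))%nat)). nia. }
  assert (Hms : forall i, (m i < m (S i))%nat).
  { intros i. pose proof (Hm i). pose proof (Hm (S i)). pose proof (Hc i). lia. }
  set (f := fun x => if excluded_middle_informative
       (B x /\ exists i, (m i <= count_below B x < 2 * m i)%nat)
       then count_below B x else 0%nat).
  exists f, m. split; [|split].
  - split; [lia|]. intros A HA.
    set (F := imagek 1 (as_unary f) A).
    assert (Hbound : forall y, (count_below F y <= 1 + count_below A (K * (2 * y + 1)))%nat).
    { intros y.
      etransitivity.
      apply (cnt_impl F (fun v => (exists a, (a < K * (2 * y + 1))%nat /\ A a /\ f a = v) \/ v = 0%nat)).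
      { intros v Hv [x [Hx Hfx]]. unfold as_unary in Hfx.
        destruct (Nat.eq_dec v 0); [right; auto|left].
        exists (x Fin.F1). split; [|split; [apply Hx|auto]].
        unfold f in Hfx.
        destruct (excluded_middle_informative _) as [[Hb [i Hi]]|]; [|lia].
        assert (x Fin.F1 < Ns i)%nat.
        { destruct (Nat.lt_ge_cases (x Fin.F1) (Ns i)) as [h|h]; [auto|].
          pose proof (cnt_mono B _ _ h). pose proof (Hm i). fold (c i) in H. lia. }
        pose proof (HNs i). pose proof (Hm i).
        assert (c i <= 2 * y + 1)%nat by lia. nia. }
      etransitivity. apply cnt_union; intros v Hv; exact Hv.
      pose proof (cnt_image A f (K * (2 * y + 1)) y).
      pose proof (cnt_single 0 y). lia. }
    set (uA := fun n => INR (count_below A n) / INR n).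
    pose proof (proj2_sig (ex_LimSup_seq uA)) as H.
    unfold upper_density in HA. fold uA in HA. unfold LimSup_seq in HA.
    rewrite HA in H. simpl in H.
    unfold upper_density. apply is_LimSup_seq_unique. intros eps. split.
    + intros N. exists (S N). split; [lia|].
      assert (0 <= INR (count_below F (S N)) / INR (S N)).
      { unfold Rdiv. apply Rmult_le_pos; [apply pos_INR|].
        apply Rlt_le, Rinv_0_lt_compat, lt_0_INR; lia. }
      pose proof (cond_pos eps). lra.
    + assert (HKr : 0 < INR K) by (apply lt_0_INR; lia).
      assert (He' : 0 < eps / (6 * INR K)).
      { pose proof (cond_pos eps). apply Rdiv_lt_0_compat; lra. }
      destruct (proj2 (H (mkposreal _ He'))) as [N0 HN0]. simpl in HN0.
      destruct (arch_nat (2 / eps)) as [N1 HN1].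
      exists (S (Nat.max N0 N1)). intros n Hn.
      set (M := (K * (2 * n + 1))%nat).
      specialize (HN0 M ltac:(unfold M; nia)). unfold uA in HN0.
      assert (HMr : INR M = INR K * (2 * INR n + 1)).
      { unfold M. rewrite mult_INR, plus_INR, mult_INR. simpl. lra. }
      assert (Hn0 : 0 < INR n) by (apply lt_0_INR; lia).
      assert (HM0 : 0 < INR M) by (rewrite HMr; nra).
      assert (HcA : INR (count_below A M) < eps / (6 * INR K) * INR M).
      { apply (Rmult_lt_compat_r (INR M)) in HN0; [|lra].
        unfold Rdiv in HN0 at 1. rewrite Rmult_assoc, Rinv_l in HN0; lra. }
      assert (HcF : INR (count_below F n) <= 1 + INR (count_below A M)).
      { rewrite <- (Rplus_0_l 1) at 1. replace (0 + 1) with (INR 1) by (simpl; lra).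
        rewrite <- plus_INR. apply le_INR. apply Hbound. }
      assert (Hn1 : INR N1 <= INR n) by (apply le_INR; lia).
      assert (Heps : 0 < eps) by apply cond_pos.
      assert (H2 : 2 < eps * INR n).
      { assert (2 / eps * eps < INR n * eps) by (apply Rmult_lt_compat_r; lra).
        unfold Rdiv in H0. rewrite Rmult_assoc, Rinv_l in H0; lra. }
      assert (H3 : eps / (6 * INR K) * INR M = eps * (2 * INR n + 1) / 6).
      { rewrite HMr. field. lra. }
      assert (Hn1' : 1 <= INR n) by (replace 1 with (INR 1) by reflexivity; apply le_INR; lia).
      assert (HF : INR (count_below F n) < eps * INR n) by nra.
      rewrite Rplus_0_l.
      apply (Rmult_lt_reg_r (INR n)); [lra|].
      unfold Rdiv. rewrite Rmult_assoc, Rinv_l; lra.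
  - intros i j Hij. induction Hij; [apply Hms|]. pose proof (Hms m0). lia.
  - intros i y Hy. destruct (exist_rank B (Ns i) y) as [x [_ [Hb Hx]]].
    { pose proof (Hm i). fold (c i). lia. }
    exists x. split; [auto|]. unfold f.
    destruct (excluded_middle_informative _) as [|Hn]; [auto|].
    exfalso; apply Hn. split; [auto|]. exists i. lia.
Qed.
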